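(* Let $G$ be a compact group such that for every positive integer $n$ there is exactly one equivalence class of irreducible representations of $G$ of dimension $n$. For $j\in\frac12\mathbb{Z}_{\ge 0}$ let $D_j$ denote the irreducible representation of dimension $2j+1$. Then for every $j\in\frac12\mathbb{Z}$ with $j\ge \frac12$, $$D_{1/2}\otimes D_j\cong D_{j-1/2}\oplus D_{j+1/2},$$ and $D_{1/2}\otimes D_0\cong D_{1/2}$.
   Context: Representations are continuous finite-dimensional unitary representations on complex Hilbert spaces, considered up to unitary equivalence. (The group $SU(2)$ satisfies the hypothesis.) *)

(* Defs.v *)
From HB Require Import structures.
From mathcomp Require Import all_boot all_order all_algebra.
From mathcomp Require Import all_classical all_reals topology normedtype.
From mathcomp Require Import complex mxtens.
Set Implicit Arguments. Unset Strict Implicit. Unset Printing Implicit Defensive.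
Import Order.TTheory GRing.Theory Num.Theory.
Import numFieldNormedType.Exports.
Local Open Scope ring_scope.
Local Open Scope classical_set_scope.

Definition is_compact_group (G : topologicalType) (mul : G -> G -> G)
    (inv : G -> G) (e : G) : Prop :=
  (forall x y z, mul x (mul y z) = mul (mul x y) z) /\
  (forall x, mul e x = x /\ mul x e = x) /\
  (forall x, mul (inv x) x = e /\ mul x (inv x) = e) /\
  continuous (fun p : G * G => mul p.1 p.2) /\
  continuous inv /\
  hausdorff_space G /\
  compact [set: G].

Definition adjmx (R : realType) m n (A : 'M[R[i]]_(m, n)) : 'M[R[i]]_(n, m) :=
  (map_mx Num.conj A)^T.

Definition unitary_mx (R : realType) m n (P : 'M[R[i]]_(m, n)) : Prop :=
  P *m adjmx P = 1%:M /\ adjmx P *m P = 1%:M.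

(* A continuous unitary representation of dimension n: g acts on column
   vectors v in C^n by v |-> rho g *m v. *)
Definition is_urep (R : realType) (G : topologicalType) (mul : G -> G -> G)
    (e : G) n (rho : G -> 'M[R[i]]_n) : Prop :=
  [/\ rho e = 1%:M,
      (forall g h, rho (mul g h) = rho g *m rho h),
      (forall g, unitary_mx (rho g)) &
      (forall i j, continuous ((fun g => rho g i j) : G -> (R[i])^o))].

(* A subspace W of C^n is spanned by the (transposed) rows of a matrix W;
   it is invariant iff rho g W ⊆ W for all g, i.e. W *m (rho g)^T ⊆ W. *)
Definition invariant_subspace (R : realType) (G : Type) n
    (rho : G -> 'M[R[i]]_n) m (W : 'M[R[i]]_(m, n)) : Prop :=
  forall g, (W *m (rho g)^T <= W)%MS.

Definition irreducible_rep (R : realType) (G : Type) n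
    (rho : G -> 'M[R[i]]_n) : Prop :=
  (0 < n)%N /\
  forall m (W : 'M[R[i]]_(m, n)), invariant_subspace rho W ->
    \rank W = 0%N \/ \rank W = n.

Definition rep_equiv (R : realType) (G : Type) m n
    (rho : G -> 'M[R[i]]_m) (sigma : G -> 'M[R[i]]_n) : Prop :=
  exists P : 'M[R[i]]_(n, m), unitary_mx P /\
    forall g, P *m rho g = sigma g *m P.

Definition tens_rep (G : Type) (R : realType) m n
    (rho : G -> 'M[R[i]]_m) (sigma : G -> 'M[R[i]]_n) :
    G -> 'M[R[i]]_(m * n) := fun g => tensmx (rho g) (sigma g).

Definition dsum_rep (G : Type) (R : realType) m n
    (rho : G -> 'M[R[i]]_m) (sigma : G -> 'M[R[i]]_n) :
    G -> 'M[R[i]]_(m + n) := fun g => block_mx (rho g) 0 0 (sigma g).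

Definition irrep (R : realType) (G : topologicalType) (mul : G -> G -> G)
    (e : G) n (rho : G -> 'M[R[i]]_n) : Prop :=
  is_urep mul e rho /\ irreducible_rep rho.

(* Main.v *)
Require Import Defs.
From HB Require Import structures.
From mathcomp Require Import all_boot all_order all_algebra.
From mathcomp Require Import all_classical all_reals topology normedtype.
From mathcomp Require Import complex mxtens.
From mathcomp Require Import sesquilinear spectral.
From mathcomp Require Import zify.
Import numFieldNormedType.Exports.
Set Implicit Arguments. Unset Strict Implicit. Unset Printing Implicit Defensive.
Import Order.TTheory GRing.Theory Num.Theory Num.Def.
Local Open Scope ring_scope.

Notation idx := (@mxtens_index _ _).
Notation unidx := (@mxtens_unindex _ _).

Section Alg.
Variable R : realType.
Local Notation C := (R[i]).

Lemma adjE m n (A : 'M[C]_(m,n)) i j : adjmx A i j = (A j i)^*.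
Proof. by rewrite /adjmx !mxE. Qed.

Lemma adjmxE m n (A : 'M[C]_(m,n)) : adjmx A = map_mx conjC (A^T).
Proof. by apply/matrixP=> i j; rewrite adjE !mxE. Qed.

Lemma adjmxK m n (A : 'M[C]_(m,n)) : adjmx (adjmx A) = A.
Proof. by apply/matrixP=> i j; rewrite !adjE conjCK. Qed.

Lemma adjmx_mul m n p (A : 'M[C]_(m,n)) (B : 'M[C]_(n,p)) :
  adjmx (A *m B) = adjmx B *m adjmx A.
Proof.
apply/matrixP=> i j; rewrite adjE !mxE rmorph_sum; apply: eq_bigr => k _.
by rewrite !adjE rmorphM mulrC.
Qed.

Lemma adjmx1 n : adjmx (1%:M : 'M[C]_n) = 1%:M.
Proof. by apply/matrixP=> i j; rewrite adjE !mxE eq_sym rmorph_nat. Qed.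

Lemma adjmx0 m n : adjmx (0 : 'M[C]_(m,n)) = 0.
Proof. by apply/matrixP=> i j; rewrite /adjmx !mxE rmorph0. Qed.

Lemma adjmxB m n (A B : 'M[C]_(m,n)) : adjmx (A - B) = adjmx A - adjmx B.
Proof. by apply/matrixP=> i j; rewrite /adjmx !mxE rmorphB. Qed.

Lemma adjmxZ m n c (A : 'M[C]_(m,n)) : adjmx (c *: A) = c^* *: adjmx A.
Proof. by apply/matrixP=> i j; rewrite /adjmx !mxE rmorphM. Qed.

Lemma adjmx_eq0 m n (A : 'M[C]_(m,n)) : (adjmx A == 0) = (A == 0).
Proof.
apply/eqP/eqP=> [H|->]; last exact: adjmx0.
by rewrite -[A]adjmxK H adjmx0.
Qed.

End Alg.

Section Rep.
Variable R : realType.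
Local Notation C := (R[i]).
Variable G : topologicalType.
Variables (mul : G -> G -> G) (inv : G -> G) (e : G).
Hypothesis Hg : is_compact_group mul inv e.

Definition intw m n (rho : G -> 'M[C]_m) (sigma : G -> 'M[C]_n) (A : 'M[C]_(n,m)) :=
  forall g, A *m rho g = sigma g *m A.

Lemma mulgV g : mul g (inv g) = e.
Proof. by case: Hg => _ [_ [H _]]; case: (H g). Qed.
Lemma mulVg g : mul (inv g) g = e.
Proof. by case: Hg => _ [_ [H _]]; case: (H g). Qed.

Lemma rep_inv n (rho : G -> 'M[C]_n) g : is_urep mul e rho -> rho (inv g) = adjmx (rho g).
Proof.
case=> H1 HM HU _.
have [_ U2] := HU g.
have H : rho g *m rho (inv g) = 1%:M by rewrite -HM mulgV H1.
by rewrite -[rho (inv g)]mul1mx -U2 -mulmxA H mulmx1.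
Qed.

Lemma intw_adj m n (rho : G -> 'M[C]_m) (sigma : G -> 'M[C]_n) A :
  is_urep mul e rho -> is_urep mul e sigma -> intw rho sigma A -> intw sigma rho (adjmx A).
Proof.
move=> Hr Hs HA g.
have := HA (inv g); rewrite !rep_inv // => /(congr1 (@adjmx _ _ _)).
by rewrite !adjmx_mul !adjmxK.
Qed.

Lemma intw_comp m n p (rho : G -> 'M[C]_m) (sigma : G -> 'M[C]_n) (tau : G -> 'M[C]_p) A B :
  intw rho sigma A -> intw sigma tau B -> intw rho tau (B *m A).
Proof. by move=> HA HB g; rewrite -mulmxA HA !mulmxA HB. Qed.

Lemma intw_lin m n (rho : G -> 'M[C]_m) (sigma : G -> 'M[C]_n) A B c :
  intw rho sigma A -> intw rho sigma B -> intw rho sigma (A - c *: B).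
Proof.
by move=> HA HB g; rewrite mulmxBl mulmxBr HA -scalemxAl HB -scalemxAr.
Qed.

Lemma schur_rank p q (rho : G -> 'M[C]_p) (sigma : G -> 'M[C]_q) A :
  irreducible_rep rho -> irreducible_rep sigma -> intw rho sigma A -> A != 0 ->
  p = q /\ \rank A = p.
Proof.
move=> [p0 Hr] [q0 Hs] HA A0.
have rA0 : \rank A != 0%N by rewrite mxrank_eq0.
have hT : invariant_subspace sigma A^T.
  by move=> g; rewrite -trmx_mul -HA trmx_mul submxMl.
have rAq : \rank A = q.
  by case: (Hs _ _ hT); rewrite mxrank_tr // => H; rewrite H in rA0.
have hK : invariant_subspace rho (kermx A^T).
  move=> g; apply/sub_kermxP.
  by rewrite -mulmxA -trmx_mul HA trmx_mul mulmxA mulmx_ker mul0mx.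
have rK := mxrank_ker A^T; rewrite mxrank_tr in rK.
have rAp : (\rank A <= p)%N by apply: rank_leq_col.
case: (Hs _ _ hT) => [|_]; first by rewrite mxrank_tr => H; rewrite H in rA0.
case: (Hr _ _ hK) => H; rewrite H in rK.
  have : \rank A = p by apply/eqP; rewrite eqn_leq rAp /= -subn_eq0 -rK.
  by move=> H2; split=> //; rewrite -H2 rAq.
exfalso; move: rK rA0 rAp p0; set r := \rank A; lia.
Qed.

Lemma schur_scalar n (rho : G -> 'M[C]_n) A :
  irreducible_rep rho -> intw rho rho A -> exists c, A = c%:M.
Proof.
move=> Hr HA; have [n0 _] := Hr.
have [c Hc] := eigenvalue_closed A n0.
exists c; apply/eqP; rewrite -subr_eq0; apply/negPn/negP => B0.
have HB : intw rho rho (A - c%:M).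
  by move=> g; rewrite mulmxBl mulmxBr HA scalar_mxC.
have [_ rB] := schur_rank Hr Hr HB B0.
move: Hc; rewrite /eigenvalue /eigenspace -mxrank_eq0 mxrank_ker rB subnn.
by [].
Qed.

Lemma schur_mult p q (rho : G -> 'M[C]_p) (sigma : G -> 'M[C]_q) A1 A2 :
  irreducible_rep rho -> irreducible_rep sigma -> intw rho sigma A1 ->
  intw rho sigma A2 -> A1 != 0 -> exists c, A2 = c *: A1.
Proof.
move=> Hr Hs H1 H2 A0.
have [epq rA] := schur_rank Hr Hs H1 A0.
subst q.
have uA : A1 \in unitmx by rewrite -row_free_unit /row_free rA.
have HB : intw rho rho (invmx A1 *m A2).
  move=> g; have E : invmx A1 *m sigma g = rho g *m invmx A1.
    by rewrite -[LHS](mulmxK uA) -(mulmxA (invmx A1)) -H1 mulmxA mulVmx // mul1mx.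
  by rewrite -mulmxA H2 !mulmxA E.
have [c Hc] := schur_scalar Hr HB.
exists c; rewrite -[A2](mulKVmx uA) Hc mul_mx_scalar.
by [].
Qed.

Lemma nz_entry m n (A : 'M[C]_(m,n)) : A != 0 -> exists i j, A i j != 0.
Proof.
move=> A0; case/boolP: [exists i, exists j, A i j != 0].
  by case/existsP=> i /existsP [j H]; exists i, j.
rewrite negb_exists => /forallP H; case/negP: A0; apply/eqP/matrixP=> i j.
by have := H i; rewrite negb_exists => /forallP /(_ j); rewrite negbK mxE => /eqP.
Qed.

Lemma AAdiag_gt0 m n (A : 'M[C]_(m,n)) i j : A i j != 0 -> 0 < (A *m adjmx A) i i.
Proof.
move=> Aij; rewrite mxE (bigD1 j) //= ltr_wpDr ?sumr_ge0 //.
  by move=> k _; rewrite adjE mul_conjC_ge0.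
by rewrite adjE mul_conjC_gt0.
Qed.

Lemma AAdiag_eq0 m n (A : 'M[C]_(m,n)) : A *m adjmx A = 0 -> A = 0.
Proof.
move=> H; apply/eqP/negP => /negP A0; have [i [j Aij]] := nz_entry A0.
by have := AAdiag_gt0 Aij; rewrite H mxE ltxx.
Qed.

Lemma normalize p q (rho : G -> 'M[C]_p) (sigma : G -> 'M[C]_q) A :
  is_urep mul e rho -> is_urep mul e sigma -> irreducible_rep sigma ->
  intw rho sigma A -> A != 0 ->
  exists B, intw rho sigma B /\ B *m adjmx B = 1%:M.
Proof.
move=> Ur Us Hs HA A0.
have HM : intw sigma sigma (A *m adjmx A).
  move=> g; rewrite -mulmxA (intw_adj Ur Us HA) mulmxA HA mulmxA //.
have [c Hc] := schur_scalar Hs HM.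
have [i [j Aij]] := nz_entry A0.
have c0 : 0 < c by have := AAdiag_gt0 Aij; rewrite Hc mxE eqxx mulr1n.
set s := sqrtC c.
have s0 : 0 < s by rewrite sqrtC_gt0.
have sc : s^* = s by rewrite geC0_conj // ltW.
exists (s^-1 *: A); split.
  by move=> g; rewrite -scalemxAl HA scalemxAr.
rewrite adjmxZ -scalemxAl -scalemxAr scalerA Hc scale_scalar_mx. idtac.
have sc2 : s * s = c by rewrite -expr2 sqrtCK.
have sV : conjC s^-1 = s^-1 by rewrite geC0_conj // invr_ge0 ltW.
have sn0 : s != 0 by rewrite gt_eqF.
by rewrite sV -sc2 mulrACA mulVf // mul1r.
Qed.

Lemma cont_cst (c : C) : continuous ((fun=> c) : G -> C^o).
Proof. by move=> x; apply: cst_continuous. Qed.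

Lemma cont_add (f h : G -> C^o) : continuous f -> continuous h ->
  continuous (fun x => f x + h x).
Proof. by move=> Hf Hh x; exact: (@continuousD _ _ _ f h x (Hf x) (Hh x)). Qed.

Lemma cont_mul (f h : G -> C^o) : continuous f -> continuous h ->
  continuous (fun x => f x * h x).
Proof. by move=> Hf Hh x; exact: (@continuousM _ G f h x (Hf x) (Hh x)). Qed.

Lemma cont_sum (I : finType) (F : I -> G -> C^o) : (forall i, continuous (F i)) ->
  continuous (fun g => \sum_i F i g).
Proof.
move=> HF.
suff H : forall l, continuous (fun g => \sum_(i <- l) F i g) by exact: H (index_enum I).
elim => [|a l IH].
  under eq_fun do rewrite big_nil; exact: cont_cst.
under eq_fun do rewrite big_cons; exact: cont_add.
Qed.

Lemma conj_cont : continuous (conjC : C^o -> C^o).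
Proof.
move=> x; apply/(@cvgrPdist_lt _ _ _ _ (nbhs_filter x)) => eps eps0.
have := (@cvgrPdist_lt _ _ _ (nbhs x) (nbhs_filter x) id x).1 (@cvg_id _ (nbhs x)) eps eps0.
by apply: filterS => t; rewrite -rmorphB norm_conjC.
Qed.

Lemma cont_conj (f : G -> C^o) : continuous f -> continuous (fun x => conjC (f x)).
Proof. by move=> Hf x; apply: continuous_comp; [apply: Hf | apply: conj_cont]. Qed.

Definition tens1 m n : tensmx (1%:M : 'M[C]_m) (1%:M : 'M[C]_n) = 1%:M.
Proof.
apply/matrixP=> i j; case: (mxtens_indexP i) => i1 i2; case: (mxtens_indexP j) => j1 j2.
rewrite tensmxE !mxE.
by rewrite (inj_eq (can_inj (@mxtens_indexK m n))) xpair_eqE -natrM mulnb.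
Qed.

Lemma adjmx_tens m n p q (A : 'M[C]_(m,n)) (B : 'M[C]_(p,q)) :
  adjmx (tensmx A B) = tensmx (adjmx A) (adjmx B).
Proof.
apply/matrixP=> i j; case: (mxtens_indexP i) => i1 i2; case: (mxtens_indexP j) => j1 j2.
by rewrite adjE !tensmxE !adjE rmorphM.
Qed.

Lemma cont_entry n (rho : G -> 'M[C]_n) m p (A : 'M[C]_(m,n)) (B : 'M[C]_(n,p)) i j :
  is_urep mul e rho -> continuous ((fun g => (A *m rho g *m B) i j) : G -> C^o).
Proof.
case=> _ _ _ Hc.
under eq_fun do rewrite mxE.
apply: cont_sum => k; apply: cont_mul; last exact: cont_cst.
under eq_fun do rewrite mxE.
by apply: cont_sum => l; apply: cont_mul; [exact: cont_cst | exact: Hc].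
Qed.

Lemma urep_tens m n (rho : G -> 'M[C]_m) (sigma : G -> 'M[C]_n) :
  is_urep mul e rho -> is_urep mul e sigma -> is_urep mul e (tens_rep rho sigma).
Proof.
move=> [r1 rM rU rC] [s1 sM sU sC]; split.
- by rewrite /tens_rep r1 s1 tens1.
- by move=> g h; rewrite /tens_rep rM sM tensmx_mul.
- move=> g; have [ra rb] := rU g; have [sa sb] := sU g.
  by rewrite /tens_rep /unitary_mx adjmx_tens !tensmx_mul ra rb sa sb tens1.
- move=> i j; case: (mxtens_indexP i) => i1 i2; case: (mxtens_indexP j) => j1 j2.
  rewrite /tens_rep; under eq_fun do rewrite tensmxE.
  by apply: cont_mul.
Qed.

Definition crep n (rho : G -> 'M[C]_n) := fun g => map_mx conjC (rho g).

Lemma adjmx_map m n (A : 'M[C]_(m,n)) : adjmx (map_mx conjC A) = map_mx conjC (adjmx A).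
Proof. by apply/matrixP=> i j; rewrite /adjmx !mxE. Qed.

Lemma urep_crep n (rho : G -> 'M[C]_n) : is_urep mul e rho -> is_urep mul e (crep rho).
Proof.
move=> [r1 rM rU rC]; split.
- by rewrite /crep r1 map_mx1.
- by move=> g h; rewrite /crep rM map_mxM.
- move=> g; have [ra rb] := rU g.
  by rewrite /crep /unitary_mx adjmx_map -!map_mxM ra rb map_mx1.
- move=> i j; rewrite /crep; under eq_fun do rewrite mxE.
  exact: cont_conj.
Qed.

Lemma irr_crep n (rho : G -> 'M[C]_n) : irreducible_rep rho -> irreducible_rep (crep rho).
Proof.
move=> [n0 Hr]; split => // m W HW.
have H : invariant_subspace rho (map_mx conjC W).
  move=> g; have := HW g; rewrite -(map_submx conjC) map_mxM /crep map_trmx.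
  by rewrite map_mxCK.
by have := Hr _ _ H; rewrite mxrank_map.
Qed.

Lemma irrep_crep n (rho : G -> 'M[C]_n) : irrep mul e rho -> irrep mul e (crep rho).
Proof. by case=> H1 H2; split; [exact: urep_crep | exact: irr_crep]. Qed.

Lemma adjmx_tr m n (A : 'M[C]_(m,n)) : adjmx A^T = (adjmx A)^T.
Proof. by apply/matrixP=> i j; rewrite /adjmx !mxE. Qed.

Definition resrep n (rho : G -> 'M[C]_n) d (E : 'M[C]_(n,d)) :=
  fun g => adjmx E *m rho g *m E.

Lemma restrict n (rho : G -> 'M[C]_n) m (W : 'M[C]_(m,n)) :
  is_urep mul e rho -> invariant_subspace rho W ->
  exists E : 'M[C]_(n, \rank W),
    [/\ adjmx E *m E = 1%:M, (E^T :=: W)%MS,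
        is_urep mul e (resrep rho E),
        intw (resrep rho E) rho E &
        ((0 < \rank W)%N ->
         (forall m' (W' : 'M[C]_(m',n)), invariant_subspace rho W' -> (W' <= W)%MS ->
             \rank W' = 0%N \/ (\rank W <= \rank W')%N) ->
         irreducible_rep (resrep rho E))].
Proof.
move=> Ur HW.
set F := schmidt (row_base W).
have FU : F *m adjmx F = 1%:M.
  rewrite adjmxE; apply/unitarymxP; apply: schmidt_unitarymx; exact: rank_leq_col.
have eqF : (F :=: W)%MS.
  apply: eqmx_trans (eq_row_base W); apply: eqmx_schmidt_free; exact: row_base_free.
exists F^T.
have EE : adjmx F^T *m F^T = 1%:M.
  by apply: trmx_inj; rewrite trmx_mul trmxK adjmx_tr trmxK FU trmx1.
have Hstab : forall g, rho g *m F^T = F^T *m (adjmx F^T *m rho g *m F^T).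
  move=> g.
  have : (F *m (rho g)^T <= F)%MS.
    by rewrite eqF; apply: submx_trans (HW g); rewrite submxMr // eqF.
  case/submxP=> D HD.
  have H1 : rho g *m F^T = F^T *m D^T by apply: trmx_inj; rewrite !trmx_mul !trmxK HD.
  by rewrite -(mulmxA (adjmx F^T)) H1 (mulmxA (adjmx F^T)) EE mul1mx.
have [r1 rM rU rC] := Ur.
have Ut : is_urep mul e (resrep rho F^T).
  split.
  - by rewrite /resrep r1 mulmx1 EE.
  - by move=> g h; rewrite /resrep rM mulmxA -(mulmxA _ (rho h)) Hstab !mulmxA.
  - move=> g; rewrite /unitary_mx.
    have Ha : adjmx (resrep rho F^T g) = resrep rho F^T (inv g).
      by rewrite /resrep !adjmx_mul adjmxK (rep_inv _ Ur) mulmxA.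
    have Hb : forall h, resrep rho F^T (mul g h) = resrep rho F^T g *m resrep rho F^T h.
      by move=> h; rewrite /resrep rM mulmxA -(mulmxA _ (rho h)) Hstab !mulmxA.
    have Hc : forall h, resrep rho F^T (mul h g) = resrep rho F^T h *m resrep rho F^T g.
      by move=> h; rewrite /resrep rM mulmxA -(mulmxA _ (rho g)) Hstab !mulmxA.
    by rewrite Ha -Hb -Hc mulgV mulVg /resrep r1 mulmx1 EE.
  - move=> i j; exact: cont_entry.
split => //.
- by rewrite trmxK.
move=> W0 Hmin; split => // m' V HV.
have HV' : invariant_subspace rho (V *m F).
  move=> g.
  have H2 : F *m (rho g)^T = (resrep rho F^T g)^T *m F.
    by rewrite -[F in LHS]trmxK -trmx_mul Hstab trmx_mul trmxK.
  by rewrite -mulmxA H2 mulmxA submxMr // HV.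
have Fr : row_free F.
  by rewrite /row_free mxrank_unitary //; apply/unitarymxP; rewrite -adjmxE.
have FW : (F <= W)%MS by rewrite eqF.
have := Hmin _ _ HV' (submx_trans (submxMl _ _) FW).
rewrite mxrankMfree //; case=> [->|H]; [by left|right].
by apply/eqP; rewrite eqn_leq H rank_leq_col.
Qed.

Lemma sum_tens m n (F : 'I_(m * n) -> C) :
  \sum_(k < m * n) F k = \sum_(i < m) \sum_(j < n) F (mxtens_index (i, j)).
Proof.
rewrite pair_big /=; apply: (reindex (fun p : 'I_m * 'I_n => mxtens_index (p.1, p.2))) => /=.
exists unidx => [[k1 k2] _|k _] /=; first by rewrite mxtens_indexK.
by rewrite /= mxtens_unindexK.
Qed.

Definition ptr a b c (S : 'M[C]_(a * c, b)) : 'M[C]_(c, a * b) :=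
  \matrix_(i, j) S (idx ((unidx j).1, i)) (unidx j).2.

Lemma ptrE a b c (S : 'M[C]_(a * c, b)) i x y :
  ptr S i (mxtens_index (x, y)) = S (mxtens_index (x, i)) y.
Proof. by rewrite /ptr mxE mxtens_indexK. Qed.

Lemma ptr_intw a b c (rA : G -> 'M[C]_a) (rB : G -> 'M[C]_b) (rC : G -> 'M[C]_c) S :
  is_urep mul e rA -> intw rB (tens_rep rA rC) S ->
  intw (tens_rep (crep rA) rB) rC (ptr S).
Proof.
move=> [_ _ rU _] HS g; apply/matrixP => i j.
case: (mxtens_indexP j) => x y.
set K : 'cV[C]_a := \col_x2 \sum_(c2 < c) rC g i c2 * S (mxtens_index (x2, c2)) y.
have RHS : (rC g *m ptr S) i (mxtens_index (x, y)) = K x 0.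
  by rewrite !mxE; apply: eq_bigr => c2 _; rewrite ptrE.
have S2 : forall x1, (S *m rB g) (mxtens_index (x1, i)) y = (rA g *m K) x1 0.
  move=> x1; rewrite HS /tens_rep mxE sum_tens mxE; apply: eq_bigr => x2 _.
  rewrite /K !mxE mulr_sumr; apply: eq_bigr => c2 _.
  by rewrite tensmxE mulrA.
have LHS : (ptr S *m tens_rep (crep rA) rB g) i (mxtens_index (x, y)) =
    (adjmx (rA g) *m (rA g *m K)) x 0.
  rewrite mxE sum_tens mxE; apply: eq_bigr => x1 _.
  rewrite adjE -S2 [X in _ = _ * X]mxE mulr_sumr; apply: eq_bigr => y1 _.
  by rewrite ptrE /tens_rep tensmxE /crep !mxE mulrCA.
by rewrite LHS RHS mulmxA (rU g).2 mul1mx.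
Qed.

Lemma ptr_lin a b c (S T : 'M[C]_(a * c, b)) k : ptr (S - k *: T) = ptr S - k *: ptr T.
Proof.
apply/matrixP => i j; case: (mxtens_indexP j) => x y.
by rewrite !mxE !mxtens_indexK.
Qed.

Lemma ptr_eq0 a b c (S : 'M[C]_(a * c, b)) : ptr S = 0 -> S = 0.
Proof.
move=> H; apply/matrixP => i j; case: (mxtens_indexP i) => x y.
by rewrite -ptrE H !mxE.
Qed.

Lemma ker_inv m n (rho : G -> 'M[C]_m) (sigma : G -> 'M[C]_n) A :
  intw rho sigma A -> invariant_subspace rho (kermx A^T).
Proof.
move=> HA g; apply/sub_kermxP.
by rewrite -mulmxA -trmx_mul HA trmx_mul mulmxA mulmx_ker mul0mx.
Qed.

Lemma orth_inv n (rho : G -> 'M[C]_n) m (W : 'M[C]_(m,n)) :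
  is_urep mul e rho -> invariant_subspace rho W ->
  invariant_subspace rho (kermx (adjmx W)).
Proof.
move=> Ur HW g; apply/sub_kermxP.
have : (W *m (rho (inv g))^T <= W)%MS by apply: HW.
case/submxP => D HD.
have H : (rho g)^T *m adjmx W = adjmx W *m adjmx D.
  rewrite -adjmx_mul -HD adjmx_mul (rep_inv _ Ur) adjmx_tr adjmxK //.
by rewrite -mulmxA H mulmxA mulmx_ker mul0mx.
Qed.

Lemma cap_orth n m p (W : 'M[C]_(m,n)) (U : 'M[C]_(p,n)) :
  (U <= W)%MS -> (U <= kermx (adjmx W))%MS -> U = 0.
Proof.
case/submxP => D -> /sub_kermxP H.
apply: AAdiag_eq0; by rewrite adjmx_mul mulmxA H mul0mx.
Qed.

Lemma rank_adj m n (A : 'M[C]_(m,n)) : \rank (adjmx A) = \rank A.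
Proof. by rewrite adjmxE mxrank_map mxrank_tr. Qed.

Lemma one_neq0 n : (0 < n)%N -> (1%:M : 'M[C]_n) != 0.
Proof.
move=> n0; apply/negP => /eqP/matrixP/(_ (Ordinal n0) (Ordinal n0)).
by rewrite !mxE eqxx /= => /eqP; rewrite oner_eq0.
Qed.

Lemma isom_neq0 m n (A : 'M[C]_(m,n)) : (0 < m)%N -> A *m adjmx A = 1%:M -> A != 0.
Proof.
move=> m0 H; apply/negP => /eqP A0; move: H; rewrite A0 mul0mx => /esym/eqP.
by apply/negP; apply: one_neq0.
Qed.

Lemma square_inv m n (A : 'M[C]_(m,n)) (B : 'M[C]_(n,m)) :
  m = n -> A *m B = 1%:M -> B *m A = 1%:M.
Proof. by move=> emn; case: n / emn in A B *; apply: mulmx1C. Qed.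

Lemma adjmx_col m1 m2 n (A : 'M[C]_(m1,n)) (B : 'M[C]_(m2,n)) :
  adjmx (col_mx A B) = row_mx (adjmx A) (adjmx B).
Proof. by rewrite !adjmxE tr_col_mx map_row_mx. Qed.

Lemma intw_dsum_split a b c (rA : G -> 'M[C]_a) (rB : G -> 'M[C]_b) (rC : G -> 'M[C]_c) T :
  intw (dsum_rep rA rB) rC T -> intw rA rC (lsubmx T) /\ intw rB rC (rsubmx T).
Proof.
move=> H; split => g; have := H g;
  rewrite -[T in LHS]hsubmxK -[T in RHS]hsubmxK /dsum_rep mul_row_block
    !mulmx0 addr0 add0r mul_mx_row => /eq_row_mx [H1 H2] //.
Qed.

Lemma urep_dsum a b (rA : G -> 'M[C]_a) (rB : G -> 'M[C]_b) :
  is_urep mul e rA -> is_urep mul e rB -> is_urep mul e (dsum_rep rA rB).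
Proof.
move=> [a1 aM aU aC] [b1 bM bU bC]; split.
- by rewrite /dsum_rep a1 b1 -scalar_mx_block.
- move=> g h; rewrite /dsum_rep aM bM mulmx_block.
  by rewrite !mulmx0 !mul0mx !addr0 !add0r.
- move=> g; have [u1 u2] := aU g; have [v1 v2] := bU g.
  have Hadj : adjmx (block_mx (rA g) 0 0 (rB g)) = block_mx (adjmx (rA g)) 0 0 (adjmx (rB g)).
    by rewrite !adjmxE tr_block_mx map_block_mx !trmx0 !map_mx0.
  rewrite /unitary_mx /dsum_rep Hadj !mulmx_block !mulmx0 !mul0mx !addr0 !add0r.
  by rewrite u1 u2 v1 v2 -scalar_mx_block.
- move=> i j; rewrite /dsum_rep.
  case: (split_ordP i) => i' ->; case: (split_ordP j) => j' ->;
    under eq_fun do rewrite ?block_mxEul ?block_mxEur ?block_mxEdl ?block_mxEdr;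
    by [apply: aC | apply: bC | rewrite ?mxE; apply: cont_cst].
Qed.

Section Main.
Hypothesis Hu : forall n : nat, (0 < n)%N ->
     (exists rho : G -> 'M[C]_n, irrep mul e rho) /\
     (forall rho sigma : G -> 'M[C]_n,
        irrep mul e rho -> irrep mul e sigma -> rep_equiv rho sigma).

Lemma equiv_dims p q (rho : G -> 'M[C]_p) (sigma : G -> 'M[C]_q) :
  irrep mul e rho -> irrep mul e sigma -> p = q ->
  exists Q : 'M[C]_(q,p), [/\ Q *m adjmx Q = 1%:M, adjmx Q *m Q = 1%:M & intw rho sigma Q].
Proof.
move=> Hr Hs epq; case: q / epq in sigma Hs *.
have [_ [p0 _]] := Hr.
have [P [[U1 U2] HP]] := (Hu p0).2 _ _ Hr Hs.
by exists P; split.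
Qed.

Lemma dual (rA : G -> 'M[C]_2) : irrep mul e rA ->
  exists Q : 'M[C]_2, Q \in unitmx /\
  forall b c (rB : G -> 'M[C]_b) (rC : G -> 'M[C]_c) S,
    intw rB (tens_rep rA rC) S -> intw (tens_rep rA rB) rC (ptr S *m tensmx Q 1%:M).
Proof.
move=> HA.
have [Q [Q1 Q2 HQ]] := equiv_dims HA (irrep_crep HA) (erefl _).
exists Q; split; first by case/mulmx1_unit: Q2.
move=> b c rB rC S HS g.
have HP := ptr_intw HA.1 HS.
rewrite -mulmxA /tens_rep tensmx_mul mul1mx HQ -(mulmx1 (rB g)) -tensmx_mul.
have := HP g; rewrite /tens_rep /crep => H1.
by rewrite mulmxA -H1 mulmxA.
Qed.

Lemma dual_inj (Q : 'M[C]_2) b c (S : 'M[C]_(2 * c, b)) : Q \in unitmx -> (0 < b)%N ->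
  ptr S *m tensmx Q 1%:M = 0 -> S = 0.
Proof.
move=> uQ b0 H; apply: ptr_eq0.
have uT : tensmx Q (1%:M : 'M[C]_b) \in unitmx.
  by apply: tensmx_unit => //; [rewrite -lt0n | exact: unitmx1].
by rewrite -[ptr S](mulmxK uT) H mul0mx.
Qed.

Lemma dual_lin (Q : 'M[C]_2) b c (S T : 'M[C]_(2 * c, b)) k :
  ptr (S - k *: T) *m tensmx Q 1%:M =
  ptr S *m tensmx Q 1%:M - k *: (ptr T *m tensmx Q 1%:M).
Proof. by rewrite ptr_lin mulmxBl scalemxAl. Qed.

Definition HF d := forall (Dh : G -> 'M[C]_2) (Dd : G -> 'M[C]_d),
  irrep mul e Dh -> irrep mul e Dd ->
  (forall q (Dq : G -> 'M[C]_q) T, irrep mul e Dq ->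
     intw (tens_rep Dh Dd) Dq T -> T != 0 -> q = d.+1 \/ q.+1 = d) /\
  (forall (Dq : G -> 'M[C]_d.+1), irrep mul e Dq ->
     (exists T, intw (tens_rep Dh Dd) Dq T /\ T != 0) /\
     (forall T1 T2, intw (tens_rep Dh Dd) Dq T1 -> intw (tens_rep Dh Dd) Dq T2 ->
        T1 != 0 -> exists c, T2 = c *: T1)).

Definition C1 := forall (Dh : G -> 'M[C]_2) (D0 : G -> 'M[C]_1),
  irrep mul e Dh -> irrep mul e D0 -> rep_equiv (tens_rep Dh D0) Dh.

Definition Ck k := forall (Dh : G -> 'M[C]_2) (Dj : G -> 'M[C]_k.+1)
  (Dm : G -> 'M[C]_k) (Dp : G -> 'M[C]_k.+2),
  irrep mul e Dh -> irrep mul e Dj -> irrep mul e Dm -> irrep mul e Dp ->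
  rep_equiv (tens_rep Dh Dj) (dsum_rep Dm Dp).

Lemma fact_back m n p (T : 'M[C]_(m, n)) (P : 'M[C]_(p, n)) :
  adjmx P *m P = 1%:M -> T = T *m adjmx P *m P.
Proof. by move=> H; rewrite -mulmxA H mulmx1. Qed.

Lemma HF1 : C1 -> HF 1.
Proof.
move=> C1h Dh Dd Hh Hd.
have [P [[P1 P2] HP]] := C1h Dh Dd Hh Hd.
have UT := urep_tens Hh.1 Hd.1.
have HPa : intw Dh (tens_rep Dh Dd) (adjmx P) := intw_adj UT Hh.1 HP.
split.
  move=> q Dq T Hq HT T0.
  have T'0 : T *m adjmx P != 0.
    apply: contraNneq T0 => H; by rewrite (fact_back T P2) H mul0mx.
  have [Hq2 _] := schur_rank Hh.2 Hq.2 (intw_comp HPa HT) T'0; by left; rewrite -Hq2.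
move=> Dq Hq; split.
  have [Q [Q1 Q2 HQ]] := equiv_dims Hh Hq (erefl _).
  exists (Q *m P); split; first exact: intw_comp HP HQ.
  apply: contraTneq (isom_neq0 (isT : (0 < 2)%N) Q1) => H.
  by rewrite -[Q]mulmx1 -P1 mulmxA H mul0mx eqxx.
move=> T1 T2 H1 H2 T10.
have T'0 : T1 *m adjmx P != 0.
  apply: contraNneq T10 => H; by rewrite (fact_back T1 P2) H mul0mx.
have [c Hc] := schur_mult Hh.2 Hq.2 (intw_comp HPa H1) (intw_comp HPa H2) T'0.
exists c; by rewrite (fact_back T2 P2) Hc -scalemxAl -(fact_back T1 P2).
Qed.

Lemma row0_split m n1 n2 (T : 'M[C]_(m, n1 + n2)) :
  T != 0 -> lsubmx T != 0 \/ rsubmx T != 0.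
Proof.
move=> T0; case: (boolP (lsubmx T == 0)) => [/eqP L0|]; last by left.
right; apply: contraNneq T0 => R0; by rewrite -[T]hsubmxK L0 R0 row_mx0.
Qed.

Lemma HFk k : (0 < k)%N -> Ck k -> HF k.+1.
Proof.
move=> k0 Ckh Dh Dd Hh Hd.
have [Dm Hm] := (Hu k0).1.
have UT := urep_tens Hh.1 Hd.1.
split.
  move=> q Dq T Hq HT T0.
  have [Dp Hp] := (Hu (isT : (0 < k.+2)%N)).1.
  have [P [[P1 P2] HP]] := Ckh Dh Dd Dm Dp Hh Hd Hm Hp.
  have HPa := intw_adj UT (urep_dsum Hm.1 Hp.1) HP.
  have T'0 : T *m adjmx P != 0.
    apply: contraNneq T0 => H; by rewrite (fact_back T P2) H mul0mx.
  have [HL HR] := intw_dsum_split (intw_comp HPa HT).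
  case: (row0_split T'0) => H.
    have [Hq2 _] := schur_rank Hm.2 Hq.2 HL H; by right; rewrite -Hq2.
  have [Hq2 _] := schur_rank Hp.2 Hq.2 HR H; by left; rewrite -Hq2.
move=> Dq Hq.
have [P [[P1 P2] HP]] := Ckh Dh Dd Dm Dq Hh Hd Hm Hq.
have HPa := intw_adj UT (urep_dsum Hm.1 Hq.1) HP.
have Lz : forall T, intw (tens_rep Dh Dd) Dq T -> lsubmx (T *m adjmx P) = 0.
  move=> T HT; have [HL _] := intw_dsum_split (intw_comp HPa HT).
  apply/eqP; apply/negP => /negP H.
  by have [Hk _] := schur_rank Hm.2 Hq.2 HL H; move: Hk; lia.
split.
  exists (row_mx 0 1%:M *m P); split.
    apply: intw_comp HP _ => g.
    by rewrite /dsum_rep mul_row_block !mulmx0 !mul0mx mul1mx addr0 add0r mul_mx_row mulmx0 mulmx1.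
  apply/negP => /eqP H.
  have : row_mx (0 : 'M[C]_(k.+2, k)) 1%:M = 0 by rewrite -[row_mx _ _]mulmx1 -P1 mulmxA H mul0mx.
  by move/(congr1 rsubmx); rewrite row_mxKr linear0 => /eqP; apply/negP; apply: one_neq0.
move=> T1 T2 H1 H2 T10.
have T'0 : T1 *m adjmx P != 0.
  apply: contraNneq T10 => H; by rewrite (fact_back T1 P2) H mul0mx.
have R10 : rsubmx (T1 *m adjmx P) != 0.
  by case: (row0_split T'0) => //; rewrite Lz // eqxx.
have [_ HR1] := intw_dsum_split (intw_comp HPa H1).
have [_ HR2] := intw_dsum_split (intw_comp HPa H2).
have [c Hc] := schur_mult Hq.2 Hq.2 HR1 HR2 R10.
exists c; rewrite (fact_back T2 P2) (fact_back T1 P2) scalemxAl; congr (_ *m _).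
by rewrite -[T2 *m _]hsubmxK -[T1 *m _]hsubmxK Lz // Lz // Hc scale_row_mx scaler0.
Qed.

Lemma scalar_eq0 n (c : C) : (0 < n)%N -> (c%:M : 'M[C]_n) = 0 -> c = 0.
Proof.
move=> n0 /matrixP/(_ (Ordinal n0) (Ordinal n0)); by rewrite !mxE eqxx mulr1n.
Qed.

Lemma step k : (0 < k)%N -> (forall d, (0 < d)%N -> (d <= k)%N -> HF d) -> Ck k.
Proof.
move=> k0 HFs Dh Dj Dm Dp Hh Hj Hm Hp.
have UV := urep_tens Hh.1 Hj.1.
have [Qd [uQd Hdual]] := dual Hh.
have [_ HFk2] := HFs k k0 (leqnn k) Dh Dm Hh Hm.
have [[T0 [HT0 T00]] HTmult] := HFk2 Dj Hj.
have UTm := urep_tens Hh.1 Hm.1.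
have HT0a := intw_adj UTm Hj.1 HT0.
have HX0 := Hdual _ _ _ _ _ HT0a.
have X00 : ptr (adjmx T0) *m tensmx Qd 1%:M != 0.
  apply/negP => /eqP /(dual_inj uQd (isT : (0 < k.+1)%N)) /eqP.
  by rewrite adjmx_eq0; exact/negP.
have [X [HX XX]] := normalize UV Hm.1 Hm.2 HX0 X00.
have HWX : invariant_subspace (tens_rep Dh Dj) (kermx X^T) := ker_inv HX.
have rX : \rank X = k.
  by apply: mxrank_unitary; apply/unitarymxP; rewrite -adjmxE.
have rWX : \rank (kermx X^T) = (2 * k.+1 - k)%N by rewrite mxrank_ker mxrank_tr rX.
pose Pr r := exists m (W : 'M[C]_(m, 2 * k.+1)),
  [/\ invariant_subspace (tens_rep Dh Dj) W, (W <= kermx X^T)%MS, \rank W = r & (0 < r)%N].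
have exP : exists r, `[< Pr r >].
  exists (\rank (kermx X^T)); apply/asboolP; exists _, (kermx X^T); split => //.
  by rewrite rWX; lia.
have [r0 /asboolP HPr0 Hmin] := ex_minnP exP.
have [m [W [HW WWX rW r00]]] := HPr0.
have [E [EE EW UE HE Hirr]] := restrict UV HW.
have d0 : (0 < \rank W)%N by rewrite rW.
have irrT : irreducible_rep (resrep (tens_rep Dh Dj) E).
  apply: Hirr => // m' W' HW' W'W.
  case: (posnP (\rank W')) => [->|Hpos]; [by left | right].
  rewrite rW; apply: Hmin; apply/asboolP; exists m', W'; split => //.
  exact: submx_trans W'W WWX.
have irT : irrep mul e (resrep (tens_rep Dh Dj) E) by split.
have XE : X *m E = 0.
  apply: trmx_inj; rewrite trmx_mul trmx0; apply/sub_kermxP.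
  have EW2 : (E^T <= W)%MS by rewrite EW.
  exact: submx_trans EW2 WWX.
have E0 : E != 0.
  apply/negP => /eqP E0; move: EE; rewrite E0 mulmx0 => /esym/eqP.
  by apply/negP; apply: one_neq0.
have rWle : (\rank W <= k.+2)%N.
  have := mxrankS WWX; rewrite rWX; lia.
have rWk2 : \rank W = k.+2.
  case: (ltngtP (\rank W) k.+1) => [Hlt|Hgt|Heq].
  - exfalso.
    have HE' := Hdual _ _ _ _ _ HE.
    have HE'0 : ptr E *m tensmx Qd 1%:M != 0.
      by apply/negP => /eqP /(dual_inj uQd d0) /eqP; apply/negP.
    have [HFd _] := HFs (\rank W) d0 Hlt Dh _ Hh irT.
    have Hd := HFd _ Dj _ Hj HE' HE'0.
    have rWk : \rank W = k by move: Hd Hlt; lia.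
    have [Q [Q1 Q2 HQ]] := equiv_dims irT Hm rWk.
    have HU : intw Dm (tens_rep Dh Dj) (E *m adjmx Q).
      exact: intw_comp (intw_adj UE Hm.1 HQ) HE.
    have XU : X *m (E *m adjmx Q) = 0 by rewrite mulmxA XE mul0mx.
    have U0 : E *m adjmx Q != 0.
      apply: contraNneq E0 => H; by rewrite (fact_back E Q2) H mul0mx.
    have HXa := intw_adj UV Hm.1 HX.
    have H1 := Hdual _ _ _ _ _ HXa.
    have H2 := Hdual _ _ _ _ _ HU.
    have Xa0 : ptr (adjmx X) *m tensmx Qd 1%:M != 0.
      apply/negP => /eqP /(dual_inj uQd k0) /eqP; rewrite adjmx_eq0.
      by apply/negP; apply: isom_neq0 XX.
    have [c Hc] := HTmult _ _ H1 H2 Xa0.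
    have HUc : E *m adjmx Q = c *: adjmx X.
      apply/eqP; rewrite -subr_eq0; apply/eqP; apply: (dual_inj uQd k0).
      by rewrite dual_lin Hc subrr.
    have c0 : c = 0.
      apply: (scalar_eq0 k0); by rewrite -scalemx1 -XX scalemxAr -HUc XU.
    by move: U0; rewrite HUc c0 scale0r eqxx.
  - by move: Hgt rWle; lia.
  - exfalso.
    set Wc := (kermx X^T :&: kermx (adjmx W))%MS.
    have HWc : invariant_subspace (tens_rep Dh Dj) Wc.
      move=> g; rewrite sub_capmx; apply/andP; split.
        exact: submx_trans (submxMr _ (capmxSl _ _)) (HWX g).
      exact: submx_trans (submxMr _ (capmxSr _ _)) (orth_inv UV HW g).
    have rK : \rank (kermx (adjmx W)) = (2 * k.+1 - \rank W)%N.
      by rewrite mxrank_ker rank_adj.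
    have cap0 : (W :&: kermx (adjmx W))%MS = 0.
      by apply: (cap_orth (capmxSl _ _) (capmxSr _ _)).
    have rS : \rank (W + kermx (adjmx W))%MS = (\rank W + \rank (kermx (adjmx W)))%N.
      by apply: mxrank_disjoint_sum; rewrite cap0.
    have rS2 : \rank (kermx X^T + kermx (adjmx W))%MS = (2 * k.+1)%N.
      apply/eqP; rewrite eqn_leq rank_leq_col /=.
      have := mxrankS (addsmxS WWX (submx_refl (kermx (adjmx W)))).
      rewrite rS rK; have := rank_leq_col W; lia.
    have h1 := mxrank_sum_cap (kermx X^T) (kermx (adjmx W)).
    have rWc : \rank Wc = 1%N.
      move: h1; rewrite rS2 rK rWX Heq -/Wc; lia.
    have : (r0 <= 1)%N.
      apply: Hmin; apply/asboolP; exists _, Wc; split => //; exact: capmxSl.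
    by move: Heq; rewrite rW; lia.
have [Q [Q1 Q2 HQ]] := equiv_dims irT Hp rWk2.
have HY : intw (tens_rep Dh Dj) Dp (Q *m adjmx E).
  exact: intw_comp (intw_adj UE UV HE) HQ.
have YY : Q *m adjmx E *m adjmx (Q *m adjmx E) = 1%:M.
  by rewrite adjmx_mul adjmxK mulmxA -(mulmxA Q) EE mulmx1 Q1.
have XY : X *m adjmx (Q *m adjmx E) = 0.
  by rewrite adjmx_mul adjmxK mulmxA XE mul0mx.
have YX : Q *m adjmx E *m adjmx X = 0.
  by rewrite -[LHS]adjmxK adjmx_mul adjmxK XY adjmx0.
have PP : col_mx X (Q *m adjmx E) *m adjmx (col_mx X (Q *m adjmx E)) = 1%:M.
  by rewrite adjmx_col mul_col_row XX YY XY YX -scalar_mx_block.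
exists (col_mx X (Q *m adjmx E)); split; first split => //.
  by apply: square_inv PP; lia.
move=> g; rewrite mul_col_mx HX HY /dsum_rep mul_block_col !mul0mx addr0 add0r.
by [].
Qed.

Lemma C1_holds : C1.
Proof.
move=> Dh D0 Hh H0.
pose triv := fun _ : G => (1%:M : 'M[C]_1).
have Ht : irrep mul e triv.
  split.
    split => //.
    - by move=> g h; rewrite /triv mulmx1.
    - by move=> g; rewrite /unitary_mx /triv adjmx1 mulmx1.
    - by move=> i j; apply: cont_cst.
  split => // m W _.
  have := rank_leq_col W; case: (\rank W) => [|[|//]]; by [left | right].
have [Q [Q1 Q2 HQ]] := equiv_dims Ht H0 (erefl _).
have D01 : forall g, D0 g = 1%:M.
  move=> g; have := HQ g; rewrite /triv mulmx1 => H.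
  by rewrite -[D0 g]mulmx1 -Q1 mulmxA -H Q1.
exists (1%:M : 'M[C]_2); split.
  by split; rewrite adjmx1 mulmx1.
move=> g; rewrite /tens_rep D01 mul1mx mulmx1.
apply/matrixP => i j.
case: (@mxtens_indexP 2 1 i) => x y; case: (mxtens_indexP j) => x' y'.
rewrite /tensmx mxE !mxtens_indexK /= [y]ord1 [y']ord1 mxE eqxx mulr1.
by congr (Dh g _ _); apply: val_inj; rewrite /= muln1 addn0.
Qed.

Lemma all_Ck : forall k, (0 < k)%N -> Ck k.
Proof.
move=> kk; elim: kk.+1 {-2}kk (ltnSn kk) => // n IH k kn k0.
apply: step => // d d0 dk.
case: d d0 dk => [//|[|d']] _ dk.
  exact: HF1 C1_holds.
apply: HFk => //; apply: IH => //; lia.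
Qed.

End Main.
End Rep.

Theorem mainTheorem2 (R : realType) (G : topologicalType)
  (mul : G -> G -> G) (inv : G -> G) (e : G) :
  is_compact_group mul inv e ->
  (forall n : nat, (0 < n)%N ->
     (exists rho : G -> 'M[R[i]]_n, irrep mul e rho) /\
     (forall rho sigma : G -> 'M[R[i]]_n,
        irrep mul e rho -> irrep mul e sigma -> rep_equiv rho sigma)) ->
  (forall (k : nat) (Dhalf : G -> 'M[R[i]]_2) (Dj : G -> 'M[R[i]]_k.+1)
          (Dm : G -> 'M[R[i]]_k) (Dp : G -> 'M[R[i]]_k.+2),
     (0 < k)%N ->
     irrep mul e Dhalf -> irrep mul e Dj -> irrep mul e Dm -> irrep mul e Dp ->
     rep_equiv (tens_rep Dhalf Dj) (dsum_rep Dm Dp)) /\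
  (forall (Dhalf : G -> 'M[R[i]]_2) (D0 : G -> 'M[R[i]]_1),
     irrep mul e Dhalf -> irrep mul e D0 ->
     rep_equiv (tens_rep Dhalf D0) Dhalf).
Proof.
move=> Hg Hu; split.
  by move=> k Dh Dj Dm Dp k0; apply: (all_Ck Hg Hu k0).
exact: (C1_holds Hu).
Qed.
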